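(* Let $T$ be an $\mathcal O$-operator on a Lie algebra $\mathfrak g$ with respect to a representation $(V;\rho)$ and let $T_t=\sum_{i=0}^n\tau_it^i$ be an order $n$ deformation of $T$. Define $\mathrm{Ob}\in\mathrm{Hom}(\wedge^2V,\mathfrak g)$ by $$\mathrm{Ob}(u,v)=\sum_{i+j=n+1,\ i,j\ge1}\Big([\tau_i(u),\tau_j(v)]-\tau_i\big(\rho(\tau_j(u))(v)-\rho(\tau_j(v))(u)\big)\Big).$$ Then $\mathrm{Ob}$ is a $2$-cocycle, i.e. $d_{\bar\rho}\mathrm{Ob}=0$.
   Context: An $\mathcal O$-operator: linear $T:V\to\mathfrak g$ with $[Tu,Tv]=T(\rho(Tu)(v)-\rho(Tv)(u))$. An order $n$ deformation of $T$ is $T_t=\sum_{i=0}^n\tau_it^i$ with $\tau_0=T$, $\tau_i\in\mathrm{Hom}(V,\mathfrak g)$, such that $[T_t(u),T_t(v)]=T_t(\rho(T_t(u))(v)-\rho(T_t(v))(u))$ in $\mathfrak g[[t]]/(t^{n+1})$, equivalently $\sum_{k+l=i,\,k,l\ge0}([\tau_ku,\tau_lv]-\tau_k(\rho(\tau_lu)(v)-\rho(\tau_lv)(u)))=0$ for $0\le i\le n$. With $[u,v]_T=\rho(Tu)(v)-\rho(Tv)(u)$, the coboundary $d_{\bar\rho}:\mathrm{Hom}(\wedge^kV,\mathfrak g)\to\mathrm{Hom}(\wedge^{k+1}V,\mathfrak g)$ is $d_{\bar\rho}f(u_1,\dots,u_{k+1})=\sum_{i}(-1)^{i+1}[Tu_i,f(\dots,\hat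 u_i,\dots)]+\sum_i(-1)^{i+1}T\rho(f(\dots,\hat u_i,\dots))(u_i)+\sum_{i<j}(-1)^{i+j}f([u_i,u_j]_T,u_1,\dots,\hat u_i,\dots,\hat u_j,\dots,u_{k+1})$. *)

(* Defs.v *)
From HB Require Import structures.
From mathcomp Require Import all_boot all_order all_algebra.
Set Implicit Arguments. Unset Strict Implicit. Unset Printing Implicit Defensive.
Import GRing.Theory.
Local Open Scope ring_scope.

Section Defs.
Variable K : fieldType.

Definition is_lie_bracket (g : lmodType K) (br : g -> g -> g) : Prop :=
  [/\ (forall (a : K) x y z, br (a *: x + y) z = a *: br x z + br y z),
      (forall (a : K) x y z, br z (a *: x + y) = a *: br z x + br z y),
      (forall x, br x x = 0) &
      (forall x y z, br x (br y z) + br y (br z x) + br z (br x y) = 0)].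

Definition is_representation (g V : lmodType K) (br : g -> g -> g)
    (rho : g -> V -> V) : Prop :=
  [/\ (forall (a : K) x y v, rho (a *: x + y) v = a *: rho x v + rho y v),
      (forall (a : K) x u v, rho x (a *: u + v) = a *: rho x u + rho x v) &
      (forall x y v, rho (br x y) v = rho x (rho y v) - rho y (rho x v))].

Variables (g V : lmodType K) (br : g -> g -> g) (rho : g -> V -> V).

Definition is_O_operator (T : {linear V -> g}) : Prop :=
  forall u v, br (T u) (T v) = T (rho (T u) v - rho (T v) u).

(* order n deformation T_t = sum_{i=0}^n tau_i t^i of T (only tau_0..tau_n matter) *)
Definition is_order_deformation (T : {linear V -> g}) (n : nat)
    (tau : nat -> {linear V -> g}) : Prop :=
  (forall u, tau 0%N u = T u) /\
  forall i : nat, (i <= n)%N -> forall u v,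
    \sum_(k < i.+1) (br (tau k u) (tau (i - k)%N v)
        - tau k (rho (tau (i - k)%N u) v - rho (tau (i - k)%N v) u)) = 0.

Definition bracketT (T : {linear V -> g}) (u v : V) : V :=
  rho (T u) v - rho (T v) u.

(* k-cochains: maps V^k -> g (elements of Hom(wedge^k V, g) when
   multilinear and alternating). *)
Definition cochain (k : nat) := ('I_k -> V) -> g.

(* coboundary d_{\bar rho} : C^{k+1} -> C^{k+2}, with 0-based indices
   (so (-1)^(i+1) in 1-based indexing becomes (-1)^i). *)
Definition dbar (T : {linear V -> g}) (k : nat) (f : cochain k.+1)
    : cochain k.+2 :=
  fun u =>
    \sum_(i < k.+2) (-1) ^+ i *: br (T (u i)) (f (fun m => u (lift i m)))
  + \sum_(i < k.+2) (-1) ^+ i *: T (rho (f (fun m => u (lift i m))) (u i))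
  + \sum_(i < k.+2) \sum_(j < k.+2 | (i < j)%N)
      (-1) ^+ (i + j) *:
        f (fun m : 'I_k.+1 =>
             match unlift ord0 m with
             | None => bracketT T (u i) (u j)
             | Some m' => u (lift j (lift (inord i) m'))
             end).

Definition Ob (n : nat) (tau : nat -> {linear V -> g}) (u v : V) : g :=
  \sum_(1 <= i < n.+1)
    (br (tau i u) (tau (n.+1 - i)%N v)
     - tau i (rho (tau (n.+1 - i)%N u) v - rho (tau (n.+1 - i)%N v) u)).

Definition Ob_cochain (n : nat) (tau : nat -> {linear V -> g}) : cochain 2 :=
  fun u => Ob n tau (u ord0) (u ord_max).

End Defs.

(* Main.v *)
Require Import Defs.
From mathcomp Require Import all_boot all_order all_algebra zify.
From Stdlib Require Import FunctionalExtensionality.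
Set Implicit Arguments. Unset Strict Implicit. Unset Printing Implicit Defensive.
Import GRing.Theory.
Local Open Scope ring_scope.

Inductive zex := ZA of nat | Z0 | ZP of zex & zex | ZN of zex.

Fixpoint zev (G : zmodType) (env : seq G) (e : zex) : G :=
  match e with
  | ZA i => nth 0 env i
  | Z0 => 0
  | ZP a b => zev env a + zev env b
  | ZN a => - zev env a
  end.

Fixpoint zco (e : zex) (j : nat) : int :=
  match e with
  | ZA i => (i == j)%:Z
  | Z0 => 0
  | ZP a b => zco a j + zco b j
  | ZN a => - zco a j
  end.

Lemma zev_sum (G : zmodType) (env : seq G) e :
  zev env e = \sum_(j < size env) env`_j *~ zco e j.
Proof.
elim: e => [i||a IHa b IHb|a IHa] /=.
- transitivity (\sum_(j < size env | i == j) env`_j).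
    case: (ltnP i (size env)) => Hi.
      by rewrite (big_pred1 (Ordinal Hi)) // => j; rewrite /= eq_sym.
    rewrite big_pred0 ?nth_default // => j; apply/negbTE.
    by apply/eqP => Hij; move: (ltn_ord j); rewrite -Hij ltnNge Hi.
  by rewrite big_mkcond; apply: eq_bigr => j _; case: (i == _); rewrite ?mulr1z ?mulr0z.
- by rewrite big1 // => j _; rewrite mulr0z.
- by rewrite IHa IHb -big_split; apply: eq_bigr => j _; rewrite mulrzDr.
- by rewrite IHa -sumrN; apply: eq_bigr => j _; rewrite mulrNz.
Qed.

Definition zcheck (m : nat) (e1 e2 : zex) :=
  all (fun j => zco e1 j == zco e2 j) (iota 0 m).

Lemma zev_eq (G : zmodType) (env : seq G) e1 e2 :
  zcheck (size env) e1 e2 -> zev env e1 = zev env e2.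
Proof.
move=> /allP H; rewrite !zev_sum; apply: eq_bigr => j _.
by rewrite (eqP (H j _)) // mem_iota /= add0n ltn_ord.
Qed.

Ltac zmem env t :=
  lazymatch env with
  | nil => constr:(false)
  | cons t _ => constr:(true)
  | cons _ ?r => zmem r t
  end.

Ltac zcollect env t :=
  lazymatch t with
  | (?a + ?b)%R => let env := zcollect env a in zcollect env b
  | (- ?a)%R => zcollect env a
  | 0%R => env
  | _ => let b := zmem env t in
         lazymatch b with true => env | false => constr:(cons t env) end
  end.

Ltac zfind env t :=
  lazymatch env with
  | cons t _ => constr:(0%N)
  | cons _ ?r => let k := zfind r t in constr:(S k)
  end.

Ltac zreify env t :=
  lazymatch t with
  | (?a + ?b)%R => let x := zreify env a in let y := zreify env b in constr:(ZP x y)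
  | (- ?a)%R => let x := zreify env a in constr:(ZN x)
  | 0%R => constr:(Z0)
  | _ => let k := zfind env t in constr:(ZA k)
  end.

Ltac zmod_eq :=
  lazymatch goal with |- @eq ?T ?l ?r =>
    let env := zcollect (@nil T) l in
    let env := zcollect env r in
    let el := zreify env l in
    let er := zreify env r in
    change (zev env el = zev env er); apply: zev_eq; vm_compute; reflexivity
  end.



Section S3.
Variable G : zmodType.
Variables M N : nat.
Definition S3 (X : nat -> nat -> nat -> G) :=
  \sum_(a < M) \sum_(b < M) \sum_(c < M) (if (a + b + c == N)%N then X a b c else 0).

Lemma S3_ext X Y : (forall a b c, X a b c = Y a b c) -> S3 X = S3 Y.
Proof.
move=> h; apply: eq_bigr => a _; apply: eq_bigr => b _; apply: eq_bigr => c _.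
by rewrite h.
Qed.
Lemma S3_sub X Y : S3 (fun a b c => X a b c - Y a b c) = S3 X - S3 Y.
Proof.
rewrite /S3 -sumrB; apply: eq_bigr => a _; rewrite -sumrB; apply: eq_bigr => b _.
rewrite -sumrB; apply: eq_bigr => c _; by case: ifP; rewrite ?subr0.
Qed.
Lemma S3_add X Y : S3 (fun a b c => X a b c + Y a b c) = S3 X + S3 Y.
Proof.
rewrite /S3 -big_split; apply: eq_bigr => a _ /=; rewrite -big_split; apply: eq_bigr => b _ /=.
rewrite -big_split; apply: eq_bigr => c _ /=; by case: ifP; rewrite ?addr0.
Qed.
Lemma S3_5 X1 X2 X3 X4 X5 :
  S3 (fun a b c => X1 a b c + X2 a b c + X3 a b c + X4 a b c + X5 a b c)
  = S3 X1 + S3 X2 + S3 X3 + S3 X4 + S3 X5.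
Proof.
by rewrite (S3_add (fun a b c => X1 a b c + X2 a b c + X3 a b c + X4 a b c))
  (S3_add (fun a b c => X1 a b c + X2 a b c + X3 a b c))
  (S3_add (fun a b c => X1 a b c + X2 a b c)) S3_add.
Qed.
Lemma S3_0 : S3 (fun _ _ _ => 0) = 0.
Proof.
rewrite /S3 big1 // => a _; rewrite big1 // => b _; rewrite big1 // => c _.
by case: ifP.
Qed.
Lemma S3_12 X : S3 (fun a b c => X b a c) = S3 X.
Proof.
rewrite /S3 exchange_big; apply: eq_bigr => a _; apply: eq_bigr => b _.
apply: eq_bigr => c _; by rewrite (addnC b a).
Qed.
Lemma S3_23 X : S3 (fun a b c => X a c b) = S3 X.
Proof.
rewrite /S3; apply: eq_bigr => a _; rewrite exchange_big; apply: eq_bigr => b _.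
apply: eq_bigr => c _; by rewrite addnAC.
Qed.
Lemma S3_c2 X : S3 (fun a b c => X c a b) = S3 X.
Proof. by rewrite (S3_23 (fun a b c => X b a c)) S3_12. Qed.
Lemma S3_13 X : S3 (fun a b c => X c b a) = S3 X.
Proof. by rewrite (S3_12 (fun a b c => X c a b)) S3_c2. Qed.
Lemma S3_cy X : S3 (fun a b c => X b c a) = S3 X.
Proof. by rewrite (S3_12 (fun a b c => X a c b)) S3_23. Qed.

Lemma S3_p12 X : S3 (fun a b c => X a b c - X b a c) = 0.
Proof. by rewrite S3_sub (S3_12 X) subrr. Qed.
Lemma S3_p13 X : S3 (fun a b c => X a b c - X c b a) = 0.
Proof. by rewrite S3_sub (S3_13 X) subrr. Qed.
Lemma S3_pcy X : S3 (fun a b c => X a b c - X b c a) = 0.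
Proof. by rewrite S3_sub (S3_cy X) subrr. Qed.
Lemma S3_pc2 X : S3 (fun a b c => X a b c - X c a b) = 0.
Proof. by rewrite S3_sub (S3_c2 X) subrr. Qed.
End S3.

Lemma cond_shift a b c N : (a <= N)%N -> (a + b + c == N)%N = (b + c == N - a)%N.
Proof. by move=> h; apply/eqP/eqP; lia. Qed.

Lemma dbl_single (G : zmodType) (F : nat -> nat -> G) M m : (m < M)%N ->
  \sum_(b < M) \sum_(c < M) (if (b + c == m)%N then F b c else 0)
  = \sum_(b < m.+1) F b (m - b)%N.
Proof.
move=> hM.
transitivity (\sum_(b < M) (if (b <= m)%N then F b (m - b)%N else 0)).
  apply: eq_bigr => b _; case: (leqP b m) => hb.
    have hc : (m - b < M)%N by lia.
    rewrite (bigD1 (Ordinal hc)) //= subnKC // eqxx big1 ?addr0 // => c hc'.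
    case: ifP => // /eqP E; case/negP: hc'; apply/eqP/val_inj => /=; lia.
  by rewrite big1 // => c _; case: ifP => // /eqP; lia.
rewrite -big_mkcond /= (big_ord_widen M (fun b => F b (m - b)%N) hM).
by apply: eq_bigl => b; rewrite ltnS.
Qed.

Section Lie.
Variables (K : fieldType) (g V : lmodType K) (br : g -> g -> g) (rho : g -> V -> V).
Hypothesis Hbr : is_lie_bracket br.
Hypothesis Hrho : is_representation br rho.

Lemma brDl x y z : br (x + y) z = br x z + br y z.
Proof. by have [H _ _ _] := Hbr; have := H 1 x y z; rewrite !scale1r. Qed.
Lemma brDr x y z : br z (x + y) = br z x + br z y.
Proof. by have [_ H _ _] := Hbr; have := H 1 x y z; rewrite !scale1r. Qed.
Lemma br0l z : br 0 z = 0.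
Proof. by apply: (addrI (br 0 z)); rewrite addr0 -brDl addr0. Qed.
Lemma br0r z : br z 0 = 0.
Proof. by apply: (addrI (br z 0)); rewrite addr0 -brDr addr0. Qed.
Lemma brNl x z : br (- x) z = - br x z.
Proof. by apply: (addrI (br x z)); rewrite -brDl !subrr br0l. Qed.
Lemma brNr x z : br z (- x) = - br z x.
Proof. by apply: (addrI (br z x)); rewrite -brDr !subrr br0r. Qed.
Lemma brBl x y z : br (x - y) z = br x z - br y z.
Proof. by rewrite brDl brNl. Qed.
Lemma brBr x y z : br z (x - y) = br z x - br z y.
Proof. by rewrite brDr brNr. Qed.
Lemma brC x y : br x y = - br y x.
Proof.
have [_ _ H _] := Hbr; have := H (x + y).
rewrite brDl !brDr !H add0r addr0 => /eqP; rewrite addr_eq0 => /eqP //.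
Qed.
Lemma jacobi x y z : br x (br y z) + br y (br z x) + br z (br x y) = 0.
Proof. by have [_ _ _ H] := Hbr. Qed.

Lemma rhoDl x y v : rho (x + y) v = rho x v + rho y v.
Proof. by have [H _ _] := Hrho; have := H 1 x y v; rewrite !scale1r. Qed.
Lemma rhoDr x u v : rho x (u + v) = rho x u + rho x v.
Proof. by have [_ H _] := Hrho; have := H 1 x u v; rewrite !scale1r. Qed.
Lemma rho0l v : rho 0 v = 0.
Proof. by apply: (addrI (rho 0 v)); rewrite addr0 -rhoDl addr0. Qed.
Lemma rho0r x : rho x 0 = 0.
Proof. by apply: (addrI (rho x 0)); rewrite addr0 -rhoDr addr0. Qed.
Lemma rhoNl x v : rho (- x) v = - rho x v.
Proof. by apply: (addrI (rho x v)); rewrite -rhoDl !subrr rho0l. Qed.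
Lemma rhoNr x v : rho x (- v) = - rho x v.
Proof. by apply: (addrI (rho x v)); rewrite -rhoDr !subrr rho0r. Qed.
Lemma rhoBl x y v : rho (x - y) v = rho x v - rho y v.
Proof. by rewrite rhoDl rhoNl. Qed.
Lemma rhoBr x u v : rho x (u - v) = rho x u - rho x v.
Proof. by rewrite rhoDr rhoNr. Qed.
Lemma rho_br x y v : rho (br x y) v = rho x (rho y v) - rho y (rho x v).
Proof. by have [_ _ H] := Hrho. Qed.

Definition addm (A : V -> g) := forall x y, A (x - y) = A x - A y.

Lemma addm0 A : addm A -> A 0 = 0.
Proof. by move=> h; rewrite -(subrr 0) h subrr. Qed.
Lemma addmN A : addm A -> forall x, A (- x) = - A x.
Proof. by move=> h x; rewrite -sub0r h addm0 // sub0r. Qed.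

Definition Gm (B C : V -> g) (x y : V) : g :=
  br (B x) (C y) - B (rho (C x) y - rho (C y) x).

Definition bT (A : V -> g) (x y : V) : V := rho (A x) y - rho (A y) x.

Definition Dm (A : V -> g) (f : V -> V -> g) (u v w : V) : g :=
  br (A u) (f v w) - br (A v) (f u w) + br (A w) (f u v)
  + A (rho (f v w) u) - A (rho (f u w) v) + A (rho (f u v) w)
  - f (bT A u v) w + f (bT A u w) v - f (bT A v w) u.

Section Pt.
Variables (u v w : V).
Definition Z12 (A B C : V -> g) :=
  - br (A v) (br (B u) (C w)) - A (rho (C w) (rho (B v) u))
  + A (rho (C w) (rho (B u) v)) - A (rho (C v) (rho (B u) w)).
Definition Zcy (A B C : V -> g) :=
  A (rho (B v) (rho (C w) u)) - A (rho (B u) (rho (C w) v)) + A (rho (B u) (rho (C v) w))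
  - A (rho (B (rho (C v) w)) u) + A (rho (B (rho (C w) v)) u)
  + A (rho (B (rho (C u) w)) v) - A (rho (B (rho (C w) u)) v)
  - A (rho (B (rho (C u) v)) w) + A (rho (B (rho (C v) u)) w).
Definition Z13 (A B C : V -> g) :=
  - br (A u) (B (rho (C v) w)) + br (A u) (B (rho (C w) v))
  + br (A v) (B (rho (C u) w)) - br (A v) (B (rho (C w) u))
  - br (A w) (B (rho (C u) v)) + br (A w) (B (rho (C v) u)).
Definition Zc2 (A B C : V -> g) := br (A w) (br (B u) (C v)).
Definition Jm (A B C : V -> g) :=
  br (A u) (br (B v) (C w)) - br (B v) (br (A u) (C w)) + br (C w) (br (A u) (B v)).

Lemma Jm0 A B C : Jm A B C = 0.
Proof.
rewrite /Jm -(jacobi (A u) (B v) (C w)) (brC (C w) (A u)) brNr; zmod_eq.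
Qed.

Lemma Dm_expand A B C : addm A -> addm B -> addm C ->
  Dm A (Gm B C) u v w =
    (Z12 A B C - Z12 B A C) + (Zcy A B C - Zcy B C A)
  + (Z13 A B C - Z13 C B A) + (Zc2 A B C - Zc2 C A B) + Jm A B C.
Proof.
move=> hA hB hC.
rewrite /Dm /Gm /bT /Z12 /Zcy /Z13 /Zc2 /Jm.
rewrite !(hA, hB, hC, brBl, brBr, rhoBl, rhoBr, rho_br, addmN hA, addmN hB, addmN hC,
          brNl, brNr, rhoNl, rhoNr).
rewrite ![br (B (rho _ _)) (C _)]brC.
zmod_eq.
Qed.
End Pt.

Lemma addmD A : addm A -> forall x y, A (x + y) = A x + A y.
Proof. by move=> h x y; rewrite -{1}[y]opprK h addmN // opprK. Qed.

Lemma Dm_ext A f f' u v w : (forall x y, f x y = f' x y) -> Dm A f u v w = Dm A f' u v w.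
Proof. by move=> h; rewrite /Dm !h. Qed.
Lemma Dm_extA A A' f u v w : (forall x, A x = A' x) -> Dm A f u v w = Dm A' f u v w.
Proof. by move=> h; rewrite /Dm /bT !h. Qed.
Lemma Dm0 A u v w : addm A -> Dm A (fun _ _ => 0) u v w = 0.
Proof. by move=> hA; rewrite /Dm !br0r !rho0l (addm0 hA); zmod_eq. Qed.
Lemma Dm_add A f1 f2 u v w : addm A ->
  Dm A (fun x y => f1 x y + f2 x y) u v w = Dm A f1 u v w + Dm A f2 u v w.
Proof. by move=> hA; rewrite /Dm !brDr !rhoDl !(addmD hA); zmod_eq. Qed.
Lemma Dm_sum A (I : Type) (r : seq I) (F : I -> V -> V -> g) u v w : addm A ->
  Dm A (fun x y => \sum_(i <- r) F i x y) u v w = \sum_(i <- r) Dm A (F i) u v w.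
Proof.
move=> hA; elim: r => [|i r IH].
  rewrite big_nil; transitivity (Dm A (fun _ _ => 0) u v w); last exact: Dm0.
  apply: Dm_ext => x y /=; by rewrite big_nil.
rewrite big_cons -IH -Dm_add //; apply: Dm_ext => x y /=; by rewrite big_cons.
Qed.
Lemma Dm_if A (P : bool) f u v w : addm A ->
  Dm A (fun x y => if P then f x y else 0) u v w = if P then Dm A f u v w else 0.
Proof. by move=> hA; case: P; [apply: Dm_ext | rewrite Dm0]. Qed.


Section Main.
Variables (T : {linear V -> g}) (n : nat) (tau : nat -> {linear V -> g}).
Hypothesis Hdef : is_order_deformation br rho T n tau.

Definition sig (i : nat) (x : V) : g := if (i <= n)%N then tau i x else 0.
Lemma sig_addm i : addm (sig i).
Proof. by move=> x y; rewrite /sig; case: ifP => _; [rewrite linearB | rewrite subr0]. Qed.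

Lemma S3_main u v w :
  S3 n.+2 n.+1 (fun a b c => Dm (sig a) (Gm (sig b) (sig c)) u v w) = 0.
Proof.
rewrite (@S3_ext _ _ _ _ (fun a b c =>
   (Z12 u v w (sig a) (sig b) (sig c) - Z12 u v w (sig b) (sig a) (sig c))
 + (Zcy u v w (sig a) (sig b) (sig c) - Zcy u v w (sig b) (sig c) (sig a))
 + (Z13 u v w (sig a) (sig b) (sig c) - Z13 u v w (sig c) (sig b) (sig a))
 + (Zc2 u v w (sig a) (sig b) (sig c) - Zc2 u v w (sig c) (sig a) (sig b))
 + Jm u v w (sig a) (sig b) (sig c))); last first.
  by move=> a b c; apply: Dm_expand => //; apply: sig_addm.
rewrite S3_5 (S3_p12 _ _ (fun a b c => Z12 u v w (sig a) (sig b) (sig c)))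
  (S3_pcy _ _ (fun a b c => Zcy u v w (sig a) (sig b) (sig c)))
  (S3_p13 _ _ (fun a b c => Z13 u v w (sig a) (sig b) (sig c)))
  (S3_pc2 _ _ (fun a b c => Zc2 u v w (sig a) (sig b) (sig c))).
rewrite (@S3_ext _ _ _ _ (fun _ _ _ => 0)) ?S3_0 ?addr0 // => a b c.
exact: Jm0.
Qed.

Definition Esum m x y := \sum_(b < n.+2) \sum_(c < n.+2)
  (if (b + c == m)%N then Gm (sig b) (sig c) x y else 0).

Lemma E_zero m x y : (m <= n)%N -> Esum m x y = 0.
Proof.
move=> hm; rewrite /Esum (dbl_single (fun b c => Gm (sig b) (sig c) x y)); last by lia.
case: Hdef => _ Hd; apply: eq_trans (Hd m hm x y); apply: eq_bigr => k _.
have hk := ltn_ord k.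
rewrite /Gm /sig; have -> : (k <= n)%N by lia.
by have -> : (m - k <= n)%N by lia.
Qed.

Lemma E_top x y : Esum n.+1 x y = Ob br rho n tau x y.
Proof.
rewrite /Esum (dbl_single (fun b c => Gm (sig b) (sig c) x y)) //.
rewrite big_ord_recl big_ord_recr /= /bump !leq0n !add1n subn0 subnn.
have s0 : forall z, sig n.+1 z = 0 by move=> z; rewrite /sig ltnn.
have -> : Gm (sig 0) (sig n.+1) x y = 0.
  by rewrite /Gm !s0 br0r !rho0l subrr (addm0 (sig_addm 0)) subrr.
have -> : Gm (sig n.+1) (sig 0) x y = 0.
  by rewrite /Gm !s0 br0l subrr.
rewrite add0r addr0 /Ob big_add1 /= big_mkord; apply: eq_bigr => i _.
have hi := ltn_ord i.
rewrite subSS /Gm /sig; have -> : (i.+1 <= n)%N by [].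
by have -> : (n - i <= n)%N by lia.
Qed.

Lemma Dm_T_Ob u v w : Dm T (Ob br rho n tau) u v w = 0.
Proof.
rewrite -(S3_main u v w).
transitivity (\sum_(a < n.+2) Dm (sig a) (Esum (n.+1 - a)%N) u v w).
  rewrite big_ord_recl big1 ?addr0.
    rewrite ?subn0; apply: esym; rewrite (Dm_extA (A' := T)); last first.
      by case: Hdef => H0 _ z; rewrite /sig leq0n H0.
    by apply: Dm_ext => x y; rewrite E_top.
  move=> i _; transitivity (Dm (sig (lift ord0 i)) (fun _ _ => 0) u v w).
    by apply: Dm_ext => x y; rewrite E_zero //= subSS leq_subr.
  exact: Dm0 (sig_addm _).
apply: eq_bigr => a _; rewrite /Esum Dm_sum; last exact: sig_addm.
apply: eq_bigr => b _; rewrite Dm_sum; last exact: sig_addm.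
apply: eq_bigr => c _; rewrite Dm_if; last exact: sig_addm.
by rewrite cond_shift // -ltnS.
Qed.
End Main.
End Lie.

Lemma dbar_Dm (K : fieldType) (g V : lmodType K) (br : g -> g -> g) (rho : g -> V -> V)
  (T : {linear V -> g}) (f : V -> V -> g) (a b c : V) :
  dbar br rho T (fun u : 'I_2 -> V => f (u ord0) (u ord_max)) (fun i : 'I_3 => nth 0 [:: a; b; c] i)
  = Dm br rho T f a b c.
Proof.
have U0 : unlift (ord0 : 'I_2) ord0 = None by rewrite unlift_none.
have U1 : unlift (ord0 : 'I_2) ord_max = Some ord0.
  have -> : (ord_max : 'I_2) = lift ord0 ord0 by apply/val_inj. by rewrite liftK.
rewrite /dbar U0 U1.
under [X in _ + _ + X]eq_bigr => i _ do rewrite big_mkcond.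
rewrite !big_ord_recl !big_ord0 /=.
rewrite /bump /= !inordK //= ?addn0 ?add0n.
rewrite !exprD !expr0 !expr1 ?mulrNN ?mulr1 ?mul1r !scale1r ?scaleN1r.
rewrite /Dm /bracketT /bT; zmod_eq.
Qed.

Theorem proposition5p13 (K : fieldType) (g V : lmodType K)
    (br : g -> g -> g) (rho : g -> V -> V) (T : {linear V -> g})
    (n : nat) (tau : nat -> {linear V -> g}) :
  is_lie_bracket br ->
  is_representation br rho ->
  is_O_operator br rho T ->
  is_order_deformation br rho T n tau ->
  forall u : 'I_3 -> V, dbar br rho T (Ob_cochain br rho n tau) u = 0.
Proof.
move=> Hbr Hrho _ Hdef u.
have -> : u = (fun i : 'I_3 => nth 0 [:: u ord0; u (inord 1); u ord_max] i).
  apply: functional_extensionality => -[[|[|[|i]]] hi] //=; congr u; apply/val_inj => //=.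
  by rewrite inordK.
rewrite (dbar_Dm br rho T (Ob br rho n tau)).
exact: (Dm_T_Ob Hbr Hrho Hdef).
Qed.
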